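(* For an undirected graph $G=(V,E)$ without self-loops and $\epsilon>0$, let $W_{G,\epsilon}$ be the symmetric matrix with $[W_{G,\epsilon}]_{ij}=\epsilon$ if $\{i,j\}\in E$, $0$ for distinct non-adjacent $i,j$, and diagonal entries chosen so that each row sums to $1$. For $n\ge1$ let $G_n'$ be the graph on the $2n$ vertices $u_1,\dots,u_n,v_1,\dots,v_n$ consisting of a complete graph on $\{u_1,\dots,u_n\}$, a complete graph on $\{v_1,\dots,v_n\}$, and the edges $\{u_i,v_i\}$, $i=1,\dots,n$. Consider the scalar ($d=1$) iteration $$x(t+1)=W_{G_n',\epsilon}\,P_\Omega\big[x(t)-\alpha(t)g(t)\big],\quad t\ge1,$$ with $\alpha(t)=1/\sqrt t$, $\Omega=[-a,a]$, initial condition $x_i(1)=0$ for all nodes, local functions $f_{u_i}(x)=\gamma|x|$ and $f_{v_i}(x)=\frac12|x-1|$, and $g_i(t)$ a subgradient of $f_i$ at $x_i(t)$. Then there exist constants $\gamma>1$ and $a>0$ (one may take $\gamma=3$, $a=6$), independent of $n$ and $\epsilon$, such that for every $n\ge4$ and every $\epsilon\in(0,1/n]$ there is a choice of subgradients $g_i(t)$ for all $i,t$ for which the resulting trajectory satisfies: (i) $x_{u_i}(t)=x^*=0$ for all $i$ and all $t$, where $x^*=0$ is the minimizer of $F=\frac{1}{2n}\sum_i f_i$ over $\Omega$; (ii) $x_{v_i}(t)-x^*$ is nonnegative and independent of $i$ for every $t$; and (iii) there exists $t_1$ such that for all $t\ge t_1$ and all $i$, $x_{v_i}(t)-x^*\ge\frac{\epsilon^{-1}}{16\sqrt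 t}$.
   Context: $P_\Omega$ denotes projection onto $\Omega$ applied to each entry. Since the maximum degree of $G_n'$ is $n$, $W_{G_n',\epsilon}$ is nonnegative and stochastic exactly when $\epsilon\le 1/n$; its diagonal entries are $1-n\epsilon$. *)

(* Defs.v *)
From Stdlib Require Import Reals Lra List Bool Arith.
Import ListNotations.
Open Scope R_scope.

(* A vertex of G_n' is (false, i) = u_{i+1} or (true, i) = v_{i+1}, 0 <= i < n. *)
Definition vtx := (bool * nat)%type.

Definition veqb (p q : vtx) : bool :=
  Bool.eqb (fst p) (fst q) && Nat.eqb (snd p) (snd q).

Definition vertices (n : nat) : list vtx :=
  map (fun i => (false, i)) (seq 0 n) ++ map (fun i => (true, i)) (seq 0 n).

Definition adjG' (n : nat) (p q : vtx) : bool :=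
  Nat.ltb (snd p) n && Nat.ltb (snd q) n &&
  ( (Bool.eqb (fst p) (fst q) && negb (Nat.eqb (snd p) (snd q)))
  || (negb (Bool.eqb (fst p) (fst q)) && Nat.eqb (snd p) (snd q)) ).

Definition degree (V : list vtx) (adj : vtx -> vtx -> bool) (p : vtx) : nat :=
  length (filter (adj p) V).

Definition Wmat (V : list vtx) (adj : vtx -> vtx -> bool) (eps : R) (p q : vtx) : R :=
  if veqb p q then 1 - eps * INR (degree V adj p)
  else if adj p q then eps else 0.

Definition sumR {A : Type} (l : list A) (f : A -> R) : R :=
  fold_right (fun a s => f a + s) 0 l.

Definition projOmega (a x : R) : R := Rmax (- a) (Rmin a x).

Definition is_subgrad (f : R -> R) (x g : R) : Prop :=
  forall y, f y >= f x + g * (y - x).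

Definition floc (gamma : R) (p : vtx) (x : R) : R :=
  if fst p then / 2 * Rabs (x - 1) else gamma * Rabs x.

Definition Fglob (gamma : R) (n : nat) (x : R) : R :=
  / (2 * INR n) * sumR (vertices n) (fun p => floc gamma p x).

(* Main.v *)
Require Import Defs.
From Stdlib Require Import Reals Lra List Arith Lia ZArith Classical.
Import ListNotations.
Open Scope R_scope.

Lemma nat_above (r : R) : exists N : nat, r <= INR N.
Proof.
  destruct (archimed (Rabs r)) as [H1 _].
  assert (Hz : (0 <= up (Rabs r))%Z).
  { assert (-1 < up (Rabs r))%Z; [|lia].
    apply lt_IZR. pose proof (Rabs_pos r). simpl. lra. }
  exists (Z.to_nat (up (Rabs r))).
  rewrite INR_IZR_INZ, Z2Nat.id by exact Hz.
  pose proof (Rle_abs r). lra.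
Qed.

Definition rr (e : R) := (1 - 2 * e) / (1 - e).

Fixpoint dseq (e : R) (k : nat) : R :=
  match k with
  | O => 0
  | S k' => rr e * Rmin (1/2) (dseq e k' + / sqrt (INR (S k')) / 2)
  end.

Definition ymin (e : R) (k : nat) := Rmin (1/2) (dseq e k + / sqrt (INR (S k)) / 2).

Lemma dseq_S e k : dseq e (S k) = rr e * ymin e k.
Proof. reflexivity. Qed.

Lemma rr_facts e : 0 < e <= /4 -> 2/3 <= rr e /\ rr e <= 1 - e /\ rr e * (1 - e) = 1 - 2 * e.
Proof.
  intros He. assert (H : rr e * (1 - e) = 1 - 2 * e) by (unfold rr; field; lra).
  split; [|split]; auto; nra.
Qed.

Lemma sqrtS_pos k : 0 < sqrt (INR (S k)).
Proof. apply sqrt_lt_R0. rewrite S_INR. pose proof (pos_INR k). lra. Qed.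

Lemma sqrtS_sq k : sqrt (INR (S k)) * sqrt (INR (S k)) = INR k + 1.
Proof. rewrite sqrt_sqrt; rewrite S_INR; [lra|]. pose proof (pos_INR k). lra. Qed.

Lemma sqrtS_ge1 k : 1 <= sqrt (INR (S k)).
Proof. pose proof (sqrtS_sq k). pose proof (sqrtS_pos k). pose proof (pos_INR k). nra. Qed.

Lemma sqrtS_mono k : sqrt (INR (S k)) <= sqrt (INR (S (S k))).
Proof. apply sqrt_le_1_alt. rewrite (S_INR (S k)). lra. Qed.

Lemma dseq_bounds e k : 0 < e <= /4 -> 0 <= dseq e k <= 1/2.
Proof.
  intros He. destruct (rr_facts e He) as [R1 [R2 _]].
  induction k as [|k IH]; [simpl; lra|].
  rewrite dseq_S.
  pose proof (Rinv_0_lt_compat _ (sqrtS_pos k)).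
  assert (0 <= ymin e k <= 1/2).
  { unfold ymin. split. apply Rmin_glb; lra. apply Rmin_l. }
  nra.
Qed.

Lemma ymin_bounds e k : 0 < e <= /4 ->
  0 <= ymin e k <= 1/2 /\ ymin e k <= dseq e k + / sqrt (INR (S k)) / 2.
Proof.
  intros He. pose proof (dseq_bounds e k He).
  pose proof (Rinv_0_lt_compat _ (sqrtS_pos k)).
  unfold ymin. split; [split|]. apply Rmin_glb; lra. apply Rmin_l. apply Rmin_r.
Qed.


Lemma dseq_upper e k : 0 < e <= /4 -> e * sqrt (INR (S k)) * dseq e k <= 1.
Proof.
  intros He. destruct (rr_facts e He) as [R1 [R2 R3]].
  induction k as [|k IH]; [simpl; lra|].
  rewrite dseq_S.
  destruct (ymin_bounds e k He) as [[Y0 Y1] Y2].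
  pose proof (dseq_bounds e k He) as Dk.
  set (s := sqrt (INR (S k))) in *.
  set (s' := sqrt (INR (S (S k)))).
  assert (Hs : 0 < s) by apply sqrtS_pos.
  assert (Hs' : 0 < s') by apply sqrtS_pos.
  assert (Ss : s * s = INR k + 1) by apply sqrtS_sq.
  assert (Ss' : s' * s' = INR k + 2) by (unfold s'; rewrite sqrtS_sq, S_INR; lra).
  pose proof (pos_INR k).
  destruct (Rle_lt_dec (e * s') 2) as [C|C].
  - assert (0 <= rr e * ymin e k <= 1/2) by nra.
    assert (0 <= e * s') by nra. nra.
  -
    assert (HK : 3 <= e * e * (INR k + 1)) by nra.
    assert (sy : s * ymin e k <= s * dseq e k + /2).
    { assert (s * (/ s / 2) = /2) by (field; lra). nra. }
    assert (key : rr e * s' * (1 + e/2) <= s).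
    { assert (P : (rr e * (1 + e/2)) * (rr e * (1 + e/2)) <= 1 - e + e*e/4).
      { assert (0 <= rr e * (1+e/2) <= (1-e)*(1+e/2)) by nra. nra. }
      assert (Q : (rr e * s' * (1 + e/2)) * (rr e * s' * (1 + e/2)) <= s * s).
      { replace ((rr e * s' * (1 + e/2)) * (rr e * s' * (1 + e/2)))
          with ((rr e * (1 + e/2)) * (rr e * (1 + e/2)) * (s' * s')) by ring.
        rewrite Ss, Ss'.
        assert (0 <= (rr e * (1 + e/2)) * (rr e * (1 + e/2))) by nra.
        assert (((rr e * (1 + e/2)) * (rr e * (1 + e/2))) * (INR k + 2) <= (1 - e + e*e/4) * (INR k + 2)) by nra.
        nra. }
      assert (0 <= rr e * s' * (1 + e/2)) by nra. nra. }
    assert (e * s' * (rr e * ymin e k) * s <= s).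
    { replace (e * s' * (rr e * ymin e k) * s) with (rr e * s' * (e * (s * ymin e k))) by ring.
      assert (e * (s * ymin e k) <= 1 + e/2) by nra.
      assert (0 <= rr e * s') by nra. nra. }
    nra.
Qed.


Definition T (e : R) (k : nat) := / e / (16 * sqrt (INR (S k))).

Lemma T_eq e k : 0 < e -> T e k = / (16 * e) * / sqrt (INR (S k)).
Proof. intros. unfold T. pose proof (sqrtS_pos k). field. lra. Qed.

Lemma T_mono e k : 0 < e -> T e (S k) <= T e k.
Proof.
  intros He. rewrite !T_eq by lra.
  pose proof (sqrtS_pos k). pose proof (sqrtS_mono k).
  assert (/ sqrt (INR (S (S k))) <= / sqrt (INR (S k))) by (apply Rinv_le_contravar; lra).
  assert (0 < / (16 * e)) by (apply Rinv_0_lt_compat; lra). nra.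
Qed.

Lemma step_lower e k : 0 < e <= /4 -> T e (S k) <= 1/3 ->
  T e k <= dseq e k -> T e (S k) <= dseq e (S k).
Proof.
  intros He C H. destruct (rr_facts e He) as [R1 [R2 R3]].
  rewrite dseq_S. unfold ymin, Rmin.
  destruct (Rle_dec (1/2) (dseq e k + / sqrt (INR (S k)) / 2)). nra.
  eapply Rle_trans; [apply T_mono; lra|].
  rewrite T_eq in * by lra.
  set (w := / sqrt (INR (S k))) in *.
  assert (0 < w) by (apply Rinv_0_lt_compat, sqrtS_pos).
  set (L := / (16 * e)) in *.
  assert (eL : e * L = /16) by (unfold L; field; lra).
  assert (0 < L) by (unfold L; apply Rinv_0_lt_compat; lra).
  assert (rr e * (L + /2) >= L) by nra.
  nra.
Qed.

Definition D e k := T e k - dseq e k.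

Lemma decrease e k : 0 < e <= /4 -> T e (S k) <= 1/3 -> 0 < D e k -> 0 < D e (S k) ->
  D e (S k) <= D e k - / (4 * sqrt (INR (S k))).
Proof.
  intros He C H1 H2. destruct (rr_facts e He) as [R1 [R2 R3]].
  unfold D in *. rewrite dseq_S in *. unfold ymin, Rmin in *.
  destruct (Rle_dec (1/2) (dseq e k + / sqrt (INR (S k)) / 2)). nra.
  pose proof (T_mono e k ltac:(lra)).
  replace (/ (4 * sqrt (INR (S k)))) with (/4 * / sqrt (INR (S k)))
    by (pose proof (sqrtS_pos k); field; lra).
  rewrite T_eq in H1 by lra.
  set (w := / sqrt (INR (S k))) in *.
  assert (0 < w) by (apply Rinv_0_lt_compat, sqrtS_pos).
  set (L := / (16 * e)) in *.
  assert (eL : e * L = /16) by (unfold L; field; lra).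
  assert (0 < L) by (unfold L; apply Rinv_0_lt_compat; lra).
  assert (Tk : T e k = L * w) by (rewrite T_eq; [reflexivity|lra]).
  pose proof (dseq_bounds e k He).
  assert ((1 - rr e) * dseq e k <= (1 - rr e) * (L * w)) by nra.
  assert ((1 - rr e) * (L * w) * (1 - e) = e * L * w) by nra.
  assert ((1 - rr e) * (L * w) <= w / 12) by nra.
  assert (rr e * w >= 2/3 * w) by nra.
  nra.
Qed.

Lemma lower_exists e : 0 < e <= /4 ->
  exists k1, forall k, (k1 <= k)%nat -> T e k <= dseq e k.
Proof.
  intros He.
  destruct (nat_above (/ (e * e))) as [k0 Hk0].
  assert (C : forall k, (k0 <= k)%nat -> T e (S k) <= 1/3).
  { intros k Hk. apply le_INR in Hk.
    set (s := sqrt (INR (S (S k)))).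
    assert (Hs : 0 < s) by apply sqrtS_pos.
    assert (Ss : s * s = INR k + 2) by (unfold s; rewrite sqrtS_sq, S_INR; lra).
    assert (e * e * / (e * e) = 1) by (field; lra).
    assert (1 <= e * s).
    { assert (e * e * (INR k + 2) >= e * e * / (e * e)) by (apply Rmult_ge_compat_l; nra).
      assert (1 <= (e * s) * (e * s)) by (replace ((e*s)*(e*s)) with (e*e*(s*s)) by ring; nra).
      assert (0 < e * s) by nra. nra. }
    assert (T e (S k) = / (16 * (e * s))) by (unfold T; fold s; field; lra).
    rewrite H1.
    assert (/ (16 * (e * s)) <= / 16) by (apply Rinv_le_contravar; lra). lra. }
  set (L := / (16 * e)).
  assert (HL : 0 < L) by (unfold L; apply Rinv_0_lt_compat; lra).
  assert (TL : forall k, T e k <= L).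
  { intros k. rewrite T_eq by lra. fold L.
    pose proof (sqrtS_ge1 k).
    assert (/ sqrt (INR (S k)) <= 1) by (rewrite <- Rinv_1; apply Rinv_le_contravar; lra). nra. }
  destruct (classic (exists k, (k0 <= k)%nat /\ D e k <= 0)) as [[k1 [Hk1 Dk1]]|NE].
  - exists k1.
    assert (forall m, T e (k1 + m) <= dseq e (k1 + m)).
    { induction m as [|m IH].
      - rewrite Nat.add_0_r. unfold D in Dk1. lra.
      - rewrite Nat.add_succ_r. apply step_lower; auto. apply C. lia. }
    intros k Hk. replace k with (k1 + (k - k1))%nat by lia. auto.
  - exfalso.
    assert (Hpos : forall k, (k0 <= k)%nat -> 0 < D e k).
    { intros k Hk. destruct (Rle_lt_dec (D e k) 0); auto. exfalso. apply NE. eauto. }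
    assert (chain : forall m, D e (k0 + m) <= D e k0 - INR m * / (4 * sqrt (INR (S (k0 + m))))).
    { induction m as [|m IH].
      - simpl. rewrite Nat.add_0_r. lra.
      - rewrite Nat.add_succ_r.
        pose proof (decrease e (k0 + m) He (C (k0+m)%nat ltac:(lia)) (Hpos (k0+m)%nat ltac:(lia)) (Hpos (S (k0+m)) ltac:(lia))).
        pose proof (sqrtS_pos (k0 + m)). pose proof (sqrtS_mono (k0 + m)).
        assert (/ (4 * sqrt (INR (S (S (k0 + m))))) <= / (4 * sqrt (INR (S (k0 + m)))))
          by (apply Rinv_le_contravar; lra).
        rewrite S_INR. pose proof (pos_INR m).
        assert (INR m * / (4 * sqrt (INR (S (S (k0 + m))))) <= INR m * / (4 * sqrt (INR (S (k0 + m)))))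
          by (apply Rmult_le_compat_l; lra).
        lra. }
    destruct (nat_above (32 * L * L + INR k0 + 1)) as [m Hm].
    pose proof (pos_INR k0).
    set (s := sqrt (INR (S (k0 + m)))).
    assert (Hs : 0 < s) by apply sqrtS_pos.
    assert (Ss : s * s = INR k0 + INR m + 1) by (unfold s; rewrite sqrtS_sq, plus_INR; lra).
    assert (4 * L * s <= INR m).
    { assert ((4 * L * s) * (4 * L * s) <= INR m * INR m) by nra. nra. }
    assert (INR m * / (4 * s) >= L).
    { assert (INR m * / (4 * s) * (4 * s) = INR m) by (field; lra).
      assert (0 < / (4 * s)) by (apply Rinv_0_lt_compat; lra). nra. }
    pose proof (chain m) as Ch. fold s in Ch.
    pose proof (Hpos (k0 + m)%nat ltac:(lia)).
    assert (D e k0 <= L) by (unfold D; pose proof (TL k0); pose proof (dseq_bounds e k0 He); lra).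
    lra.
Qed.


Lemma sumR_app {A} (l1 l2 : list A) f : sumR (l1 ++ l2) f = sumR l1 f + sumR l2 f.
Proof. induction l1; simpl; [lra|]. rewrite IHl1. lra. Qed.

Lemma sumR_map {A B} (g : A -> B) l f : sumR (map g l) f = sumR l (fun j => f (g j)).
Proof. induction l; simpl; auto. rewrite IHl. auto. Qed.

Lemma sumR_ext {A} (l : list A) f h : (forall j, In j l -> f j = h j) -> sumR l f = sumR l h.
Proof. induction l; simpl; intros H; auto. rewrite H, IHl; auto. Qed.

Lemma sumR_const {A} (l : list A) c : sumR l (fun _ => c) = INR (length l) * c.
Proof. induction l; simpl length; [simpl; lra|]. rewrite S_INR. simpl. rewrite IHl. lra. Qed.

Lemma sumR_seq_ite s m i A B :
  sumR (seq s m) (fun j => if Nat.eqb j i then A else B) =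
  if andb (Nat.leb s i) (Nat.ltb i (s + m)) then A + (INR m - 1) * B else INR m * B.
Proof.
  revert s. induction m as [|m IH]; intros s.
  - simpl. destruct (Nat.leb s i) eqn:E1; destruct (Nat.ltb i (s+0)) eqn:E2; simpl; try lra.
    apply Nat.leb_le in E1. apply Nat.ltb_lt in E2. lia.
  - simpl seq. simpl sumR. rewrite IH. rewrite S_INR.
    destruct (Nat.eqb s i) eqn:E.
    + apply Nat.eqb_eq in E. subst.
      replace (Nat.leb (S i) i) with false by (symmetry; apply Nat.leb_gt; lia).
      replace (Nat.leb i i) with true by (symmetry; apply Nat.leb_le; lia).
      replace (Nat.ltb i (i + S m)) with true by (symmetry; apply Nat.ltb_lt; lia).
      simpl. lra.
    + apply Nat.eqb_neq in E.
      destruct (Nat.leb_spec s i), (Nat.ltb_spec i (s + S m)),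
        (Nat.leb_spec (S s) i), (Nat.ltb_spec i (S s + m)); simpl; try lia; lra.
Qed.

Lemma sum_side (n i : nat) (b : bool) (f : vtx -> R) A B : (i < n)%nat ->
  (forall j, (j < n)%nat -> f (b, j) = if Nat.eqb j i then A else B) ->
  sumR (map (fun j => (b, j)) (seq 0 n)) f = A + (INR n - 1) * B.
Proof.
  intros Hi H. rewrite sumR_map.
  rewrite (sumR_ext _ _ (fun j => if Nat.eqb j i then A else B)).
  - rewrite sumR_seq_ite.
    replace (Nat.leb 0 i && Nat.ltb i (0 + n))%bool with true; [reflexivity|].
    symmetry. apply andb_true_intro. split; [apply Nat.leb_le|apply Nat.ltb_lt]; lia.
  - intros j Hj. apply in_seq in Hj. apply H. lia.
Qed.

Lemma sum_vertices n f : sumR (vertices n) f =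
  sumR (map (fun j => (false, j)) (seq 0 n)) f + sumR (map (fun j => (true, j)) (seq 0 n)) f.
Proof. unfold vertices. apply sumR_app. Qed.

Lemma adj_val n b c i j : (i < n)%nat -> (j < n)%nat ->
  adjG' n (b, i) (c, j) = if Bool.eqb b c then negb (Nat.eqb j i) else Nat.eqb j i.
Proof.
  intros Hi Hj. unfold adjG'. simpl.
  replace (Nat.ltb i n) with true by (symmetry; apply Nat.ltb_lt; lia).
  replace (Nat.ltb j n) with true by (symmetry; apply Nat.ltb_lt; lia).
  rewrite (Nat.eqb_sym i j).
  destruct b, c, (Nat.eqb j i); reflexivity.
Qed.

Lemma count_filter {A} (f : A -> bool) l :
  INR (length (filter f l)) = sumR l (fun q => if f q then 1 else 0).
Proof.
  induction l; simpl; [reflexivity|]. destruct (f a); simpl length; try rewrite S_INR; lra.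
Qed.

Lemma degree_val n b i : (i < n)%nat -> INR (degree (vertices n) (adjG' n) (b, i)) = INR n.
Proof.
  intros Hi. unfold degree. rewrite count_filter, sum_vertices.
  rewrite (sum_side n i false _ (if b then 1 else 0) (if b then 0 else 1)) by
    (auto; intros j Hj; rewrite adj_val by auto; destruct b, (Nat.eqb j i); reflexivity).
  rewrite (sum_side n i true _ (if b then 0 else 1) (if b then 1 else 0)) by
    (auto; intros j Hj; rewrite adj_val by auto; destruct b, (Nat.eqb j i); reflexivity).
  destruct b; lra.
Qed.

Lemma W_val n eps b c i j : (i < n)%nat -> (j < n)%nat ->
  Wmat (vertices n) (adjG' n) eps (b, i) (c, j) =
  if Bool.eqb b c then (if Nat.eqb j i then 1 - eps * INR n else eps)
  else (if Nat.eqb j i then eps else 0).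
Proof.
  intros Hi Hj. unfold Wmat. rewrite degree_val by auto. rewrite adj_val by auto.
  unfold veqb. simpl. rewrite (Nat.eqb_sym i j).
  destruct b, c, (Nat.eqb j i); reflexivity.
Qed.

Lemma W_sum n eps b i (h : vtx -> R) Yu Yv : (i < n)%nat ->
  (forall j, (j < n)%nat -> h (false, j) = Yu) ->
  (forall j, (j < n)%nat -> h (true, j) = Yv) ->
  sumR (vertices n) (fun q => Wmat (vertices n) (adjG' n) eps (b, i) q * h q) =
  if b then eps * Yu + (1 - eps) * Yv else (1 - eps) * Yu + eps * Yv.
Proof.
  intros Hi Hu Hv. rewrite sum_vertices.
  rewrite (sum_side n i false _
     ((if b then eps else 1 - eps * INR n) * Yu) ((if b then 0 else eps) * Yu)) by
    (auto; intros j Hj; rewrite W_val, Hu by auto; destruct b, (Nat.eqb j i); reflexivity).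
  rewrite (sum_side n i true _
     ((if b then 1 - eps * INR n else eps) * Yv) ((if b then eps else 0) * Yv)) by
    (auto; intros j Hj; rewrite W_val, Hv by auto; destruct b, (Nat.eqb j i); reflexivity).
  destruct b; ring.
Qed.


Definition xs (e : R) (t : nat) (p : vtx) : R := if fst p then dseq e (pred t) else 0.
Definition gs (e : R) (t : nat) (p : vtx) : R :=
  if fst p then - / 2 else e * ymin e (pred t) * sqrt (INR t) / (1 - e).

Lemma in_vertices n b i : In (b, i) (vertices n) -> (i < n)%nat.
Proof.
  unfold vertices. intros H. apply in_app_or in H.
  destruct H as [H|H]; apply in_map_iff in H; destruct H as [j [Hj Hin]];
  apply in_seq in Hin; inversion Hj; subst; lia.
Qed.

Lemma proj_in a z : - a <= z <= a -> projOmega a z = z.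
Proof.
  intros H. unfold projOmega. rewrite Rmin_right by lra. rewrite Rmax_right; lra.
Qed.

Lemma gu_bound e k : 0 < e <= /4 ->
  0 <= e * ymin e k * sqrt (INR (S k)) / (1 - e) <= 3.
Proof.
  intros He. pose proof (dseq_upper e k He).
  destruct (ymin_bounds e k He) as [[Y0 Y1] Y2].
  pose proof (sqrtS_pos k) as Hs.
  set (s := sqrt (INR (S k))) in *.
  assert (s * ymin e k <= s * dseq e k + /2).
  { assert (s * (/ s / 2) = /2) by (field; lra). nra. }
  set (g := e * ymin e k * s / (1 - e)).
  assert (g * (1 - e) = e * ymin e k * s) by (unfold g; field; lra).
  assert (0 <= e * ymin e k * s) by (apply Rmult_le_pos; [apply Rmult_le_pos|]; lra).
  assert (e * (s * ymin e k) <= e * (s * dseq e k + /2)) by (apply Rmult_le_compat_l; lra).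
  assert (e * ymin e k * s <= 9/8) by nra.
  split; nra.
Qed.

Theorem theorem2 :
  exists gamma a : R, gamma > 1 /\ a > 0 /\
  forall (n : nat) (eps : R), (4 <= n)%nat -> 0 < eps <= / INR n ->
  exists x g : nat -> vtx -> R,
    (forall p, In p (vertices n) -> x 1%nat p = 0) /\
    (forall (t : nat) p, (1 <= t)%nat -> In p (vertices n) ->
       is_subgrad (floc gamma p) (x t p) (g t p)) /\
    (forall (t : nat) p, (1 <= t)%nat -> In p (vertices n) ->
       x (S t) p = sumR (vertices n) (fun q =>
         Wmat (vertices n) (adjG' n) eps p q *
         projOmega a (x t q - / sqrt (INR t) * g t q))) /\
    (forall y, - a <= y <= a -> y <> 0 -> Fglob gamma n 0 < Fglob gamma n y) /\
    (forall (t i : nat), (1 <= t)%nat -> (i < n)%nat -> x t (false, i) = 0) /\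
    (forall t : nat, (1 <= t)%nat -> exists c : R, 0 <= c /\
       forall i : nat, (i < n)%nat -> x t (true, i) - 0 = c) /\
    (exists t1 : nat, forall (t i : nat), (1 <= t)%nat -> (t1 <= t)%nat -> (i < n)%nat ->
       x t (true, i) - 0 >= / eps / (16 * sqrt (INR t))).
Proof.
  exists 3, (1/2). split; [lra|]. split; [lra|].
  intros n eps Hn Heps.
  assert (Hn4 : 4 <= INR n) by (apply le_INR in Hn; simpl in Hn; lra).
  assert (He : 0 < eps <= /4).
  { split; [lra|]. eapply Rle_trans; [apply Heps|]. apply Rinv_le_contravar; lra. }
  exists (xs eps), (gs eps).
  split; [|split; [|split; [|split; [|split; [|split]]]]].
  - intros [b i] _. unfold xs. destruct b; reflexivity.
  - intros t [b i] Ht Hin. destruct t as [|k]; [lia|].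
    unfold is_subgrad, floc, xs, gs; cbn [fst pred]. destruct b; intros y.
    + pose proof (dseq_bounds eps k He).
      assert (Rabs (dseq eps k - 1) = 1 - dseq eps k) by (rewrite Rabs_left; lra).
      assert (1 - y <= Rabs (y - 1)) by (rewrite Rabs_minus_sym; apply Rle_abs).
      lra.
    + pose proof (gu_bound eps k He).
      set (g := eps * ymin eps k * sqrt (INR (S k)) / (1 - eps)) in *.
      rewrite Rabs_R0.
      assert (g * (y - 0) <= Rabs (g * y)) by (rewrite Rminus_0_r; apply Rle_abs).
      rewrite Rabs_mult, (Rabs_pos_eq g) in H0 by lra.
      pose proof (Rabs_pos y). nra.
  - intros t [b i] Ht Hin. apply in_vertices in Hin. destruct t as [|k]; [lia|].
    pose proof (sqrtS_pos k) as Hs.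
    pose proof (ymin_bounds eps k He) as [[Y0 Y1] Y2].
    rewrite (W_sum n eps b i _ (- (eps * ymin eps k / (1 - eps))) (ymin eps k)); auto.
    + unfold xs; cbn [fst pred]. destruct b.
      * rewrite dseq_S. unfold rr. field. lra.
      * field. lra.
    + intros j Hj. unfold xs, gs; cbn [fst pred].
      replace (0 - / sqrt (INR (S k)) * (eps * ymin eps k * sqrt (INR (S k)) / (1 - eps)))
        with (- (eps * ymin eps k / (1 - eps))) by (field; lra).
      apply proj_in.
      set (z := eps * ymin eps k / (1 - eps)).
      assert (z * (1 - eps) = eps * ymin eps k) by (unfold z; field; lra).
      assert (0 <= eps * ymin eps k <= /8) by nra.
      nra.
    + intros j Hj. unfold xs, gs; cbn [fst pred].
      replace (dseq eps k - / sqrt (INR (S k)) * - / 2)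
        with (dseq eps k + / sqrt (INR (S k)) / 2) by (field; lra).
      unfold projOmega. change (Rmin (1/2) (dseq eps k + / sqrt (INR (S k)) / 2)) with (ymin eps k).
      apply Rmax_right. lra.
  - intros y Hy Hy0. unfold Fglob. rewrite !sum_vertices, !sumR_map.
    unfold floc; cbn [fst]. rewrite !sumR_const, !length_seq.
    rewrite Rabs_R0, Rminus_0_l, Rabs_Ropp, Rabs_R1.
    assert (Hn0 : 0 < / (2 * INR n)) by (apply Rinv_0_lt_compat; lra).
    apply Rmult_lt_compat_l; auto.
    assert (0 < Rabs y) by (apply Rabs_pos_lt; auto).
    assert (1 - Rabs y <= Rabs (y - 1)).
    { rewrite Rabs_minus_sym. pose proof (Rabs_triang_inv 1 y). rewrite Rabs_R1 in H0. lra. }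
    nra.
  - intros t i _ _. reflexivity.
  - intros t Ht. exists (dseq eps (pred t)). split.
    + apply dseq_bounds; auto.
    + intros i Hi. unfold xs. cbn [fst]. ring.
  - destruct (lower_exists eps He) as [k1 Hk1]. exists (S k1).
    intros t i Ht Htk Hi. destruct t as [|k]; [lia|].
    unfold xs; cbn [fst pred].
    pose proof (Hk1 k ltac:(lia)). unfold T in H. lra.
Qed.
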